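(* Consider the following chemical reaction network (the ERK cascade with a negative feedback, in which MEK and ERK share the phosphatase PH) with 25 species RAF, pRAF, MEK, pMEK, ppMEK, ERK, pERK, ppERK, RAS, RAFPH, PH, PH2, RAS-RAF, MEK-pRAF, pMEK-pRAF, ERK-ppMEK, pERK-ppMEK, RAF-RAFPH, ppMEK-PH, pMEK-PH, ppERK-PH, pERK-PH, pRAF-ppERK, Z-PH2, Z and 36 reactions with rate constants $k_1,\dots,k_{36}$: RAF + RAS $\underset{k_2}{\overset{k_1}{\rightleftarrows}}$ RAS-RAF $\overset{k_3}{\to}$ pRAF + RAS; pRAF + RAFPH $\underset{k_5}{\overset{k_4}{\rightleftarrows}}$ RAF-RAFPH $\overset{k_6}{\to}$ RAF + RAFPH; MEK + pRAF $\underset{k_8}{\overset{k_7}{\rightleftarrows}}$ MEK-pRAF $\overset{k_9}{\to}$ pMEK + pRAF $\underset{k_{11}}{\overset{k_{10}}{\rightleftarrows}}$ pMEK-pRAF $\overset{k_{12}}{\to}$ ppMEK + pRAF; ppMEK + PH $\underset{k_{14}}{\overset{k_{13}}{\rightleftarrows}}$ ppMEK-PH $\overset{k_{15}}{\to}$ pMEK + PH $\underset{k_{17}}{\overset{k_{16}}{\rightleftarrows}}$ pMEK-PH $\overset{k_{18}}{\to}$ MEK + PH; ERK + ppMEK $\underset{k_{20}}{\overset{k_{19}}{\rightleftarrows}}$ ERK-ppMEK $\overset{k_{21}}{\to}$ pERK + ppMEK $\underset{k_{23}}{\overset{k_{22}}{\rightleftarrows}}$ pERK-ppMEK $\overset{k_{24}}{\to}$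 ppERK + ppMEK; ppERK + PH $\underset{k_{26}}{\overset{k_{25}}{\rightleftarrows}}$ ppERK-PH $\overset{k_{27}}{\to}$ pERK + PH $\underset{k_{29}}{\overset{k_{28}}{\rightleftarrows}}$ pERK-PH $\overset{k_{30}}{\to}$ ERK + PH; pRAF + ppERK $\underset{k_{32}}{\overset{k_{31}}{\rightleftarrows}}$ pRAF-ppERK $\overset{k_{33}}{\to}$ Z + ppERK; Z + PH2 $\underset{k_{35}}{\overset{k_{34}}{\rightleftarrows}}$ Z-PH2 $\overset{k_{36}}{\to}$ pRAF + PH2. Then for every choice of positive rate constants $k\in\mathbb{R}^{36}_{>0}$, the associated mass-action system has toric steady states; in particular its steady state ideal is a binomial ideal.
   Context: For a reaction network with species concentrations $x=(x_1,\dots,x_s)$ and reactions $y\to y'$ (complexes $y,y'\in\mathbb{Z}_{\ge0}^s$, where a complex is a formal sum of species) with positive rate constants, the mass-action system is $\dot x = f(x;k)=\sum_{\text{reactions } y\to y'} k_{y\to y'}\, x^{y}(y'-y)$, whose components $f_1,\dots,f_s$ are polynomials in $x$. The steady state ideal is $J=\langle f_1,\dots,f_s\rangle\subseteq\mathbb{R}[x_1,\dots,x_s]$. The system has toric steady states if $J$ can be generated by binomials (polynomials with at most two terms) and $J$ admits nonnegative zeros. *)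

(* Defs.v *)
From Stdlib Require Import Reals.
From HB Require Import structures.
From mathcomp Require Import all_boot all_order all_algebra.
From mathcomp Require Import mpoly.
From mathcomp Require Import Rstruct.

Set Implicit Arguments.
Unset Strict Implicit.
Unset Printing Implicit Defensive.

Import GRing.Theory Num.Theory.
Local Open Scope ring_scope.

(** A complex is given as a list of species indices (with repetitions),
    e.g. [:: 0; 8] is RAF + RAS. The stoichiometric coefficient of species
    [i] in the complex [c] is [count_mem i c]. *)

Definition cmono (n : nat) (c : seq nat) : {mpoly R[n.+1]} :=
  \prod_(j <- c) 'X_(inord j).

Definition mass_action_f (n m : nat) (rxn : 'I_m -> seq nat * seq nat)
    (k : 'I_m -> R) (i : 'I_n.+1) : {mpoly R[n.+1]} :=
  \sum_(r < m) (k r *: (cmono n (rxn r).1 *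
      (((count_mem (i : nat) (rxn r).2)%:R
        - (count_mem (i : nat) (rxn r).1)%:R) : {mpoly R[n.+1]}))).

Definition in_ideal (n : nat) (I : finType) (g : I -> {mpoly R[n]})
    (p : {mpoly R[n]}) : Prop :=
  exists c : I -> {mpoly R[n]}, p = \sum_(i : I) c i * g i.

Definition is_binomial (n : nat) (p : {mpoly R[n]}) : Prop :=
  (size (msupp p) <= 2)%N.

Definition binomial_ideal (n : nat) (I : finType) (f : I -> {mpoly R[n]}) : Prop :=
  exists (b : nat) (g : 'I_b -> {mpoly R[n]}),
    (forall j, is_binomial (g j)) /\
    (forall p, in_ideal f p <-> in_ideal g p).

Definition admits_nonneg_zero (n : nat) (I : finType) (f : I -> {mpoly R[n]}) : Prop :=
  exists x : 'I_n -> R, (forall i, 0 <= x i) /\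
    (forall p, in_ideal f p -> p.@[x] = 0).

Definition toric_steady_states (n : nat) (I : finType) (f : I -> {mpoly R[n]}) : Prop :=
  binomial_ideal f /\ admits_nonneg_zero f.

(** Species numbering (0-based):
   0 RAF, 1 pRAF, 2 MEK, 3 pMEK, 4 ppMEK, 5 ERK, 6 pERK, 7 ppERK, 8 RAS,
   9 RAFPH, 10 PH, 11 PH2, 12 RAS-RAF, 13 MEK-pRAF, 14 pMEK-pRAF,
   15 ERK-ppMEK, 16 pERK-ppMEK, 17 RAF-RAFPH, 18 ppMEK-PH, 19 pMEK-PH,
   20 ppERK-PH, 21 pERK-PH, 22 pRAF-ppERK, 23 Z-PH2, 24 Z.
  Reaction number r (0-based) has rate constant k_{r+1} of the paper. *)
Definition erk_reactions : seq (seq nat * seq nat) :=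
  [:: ([:: 0; 8], [:: 12]);
      ([:: 12], [:: 0; 8]);
      ([:: 12], [:: 1; 8]);
      ([:: 1; 9], [:: 17]);
      ([:: 17], [:: 1; 9]);
      ([:: 17], [:: 0; 9]);
      ([:: 2; 1], [:: 13]);
      ([:: 13], [:: 2; 1]);
      ([:: 13], [:: 3; 1]);
      ([:: 3; 1], [:: 14]);
      ([:: 14], [:: 3; 1]);
      ([:: 14], [:: 4; 1]);
      ([:: 4; 10], [:: 18]);
      ([:: 18], [:: 4; 10]);
      ([:: 18], [:: 3; 10]);
      ([:: 3; 10], [:: 19]);
      ([:: 19], [:: 3; 10]);
      ([:: 19], [:: 2; 10]);
      ([:: 5; 4], [:: 15]);
      ([:: 15], [:: 5; 4]);
      ([:: 15], [:: 6; 4]);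
      ([:: 6; 4], [:: 16]);
      ([:: 16], [:: 6; 4]);
      ([:: 16], [:: 7; 4]);
      ([:: 7; 10], [:: 20]);
      ([:: 20], [:: 7; 10]);
      ([:: 20], [:: 6; 10]);
      ([:: 6; 10], [:: 21]);
      ([:: 21], [:: 6; 10]);
      ([:: 21], [:: 5; 10]);
      ([:: 1; 7], [:: 22]);
      ([:: 22], [:: 1; 7]);
      ([:: 22], [:: 24; 7]);
      ([:: 24; 11], [:: 23]);
      ([:: 23], [:: 24; 11]);
      ([:: 23], [:: 1; 11])
  ].

Definition erk_rxn (r : 'I_36) : seq nat * seq nat :=
  nth ([::], [::]) erk_reactions r.

Definition erk_f (k : 'I_36 -> R) : 'I_25 -> {mpoly R[25]} :=
  mass_action_f erk_rxn k.

(* Main.v *)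
Require Import Defs.
From Stdlib Require Import Reals.
From HB Require Import structures.
From mathcomp Require Import all_boot all_order all_algebra.
From mathcomp Require Import mpoly.
From mathcomp Require Import Rstruct.
From mathcomp Require Import ring.
Local Open Scope ring_scope.
Import GRing.Theory.

Notation P := {mpoly R[25]}.
Definition M (c : seq nat) : P := cmono 24 c.
Definition rx (r : nat) := nth ([::], [::]) erk_reactions r.
Definition F (kk : nat -> R) (i : nat) : P :=
  \sum_(r <- iota 0 36) kk r *: (M (rx r).1 *
      (((count_mem i (rx r).2)%:R - (count_mem i (rx r).1)%:R) : P)).

Lemma erk_fE k (i : 'I_25) : erk_f k i = F (fun n => k (inord n)) i.
Proof.
rewrite /erk_f /mass_action_f /F.
transitivity (\sum_(0 <= r < 36) k (inord r) *: (M (rx r).1 *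
      (((count_mem (i:nat) (rx r).2)%:R - (count_mem (i:nat) (rx r).1)%:R) : P))).
  by rewrite big_mkord; apply: eq_bigr => r _; rewrite inord_val.
by [].
Qed.

Definition Bc (kk : nat -> R) y a C : P :=
  (kk a)%:MP * M y - ((kk a.+1)%:MP + (kk a.+2)%:MP) * M [:: C].
Definition hb (kk : nat -> R) a C b D : P :=
  (kk a)%:MP * M [:: C] - (kk b)%:MP * M [:: D].
Definition Gl kk : seq P :=
  [:: Bc kk [:: 0; 8] 0 12; Bc kk [:: 2; 1] 6 13; Bc kk [:: 3; 1] 9 14;
      Bc kk [:: 5; 4] 18 15; Bc kk [:: 6; 4] 21 16; Bc kk [:: 1; 9] 3 17;
      Bc kk [:: 4; 10] 12 18; Bc kk [:: 3; 10] 15 19; Bc kk [:: 7; 10] 24 20;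
      Bc kk [:: 6; 10] 27 21; Bc kk [:: 1; 7] 30 22; Bc kk [:: 24; 11] 33 23;
      hb kk 2 12 5 17; hb kk 8 13 17 19; hb kk 11 14 14 18;
      hb kk 20 15 29 21; hb kk 23 16 26 20; hb kk 32 22 35 23].
Definition g kk (j : 'I_18) : P := nth 0 (Gl kk) j.

Lemma in_ideal_nth n b (h : 'I_b -> {mpoly R[n]}) p (cs : seq {mpoly R[n]}) :
  p = \sum_(j < b) nth 0 cs j * h j -> in_ideal h p.
Proof. by move=> ->; exists (fun j : 'I_b => nth 0 cs j). Qed.



Ltac expandF :=
  rewrite /F /= !big_cons big_nil /=;
  rewrite /Bc /hb -!mul_mpolyC; ring.

Ltac close1 :=
  rewrite /g -(big_mkord xpredT (fun j => nth 0 _ j * nth 0 (Gl _) j)) /index_iota /=;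
  rewrite !big_cons big_nil /=; ring.
Lemma Fe_0 kk : F kk 0 = 0 - (Bc kk [:: 0; 8] 0 12) - (hb kk 2 12 5 17).
Proof. expandF. Qed.
Lemma c1_0 kk : in_ideal (g kk) (F kk 0).
Proof. apply: (@in_ideal_nth _ _ _ _ [:: -1; 0; 0; 0; 0; 0; 0; 0; 0; 0; 0; 0; -1; 0; 0; 0; 0; 0]); rewrite Fe_0; close1. Qed.
Lemma Fe_1 kk : F kk 1 = 0 - (Bc kk [:: 2; 1] 6 13) - (Bc kk [:: 3; 1] 9 14) - (Bc kk [:: 1; 9] 3 17) - (Bc kk [:: 1; 7] 30 22) + (hb kk 2 12 5 17) - (hb kk 32 22 35 23).
Proof. expandF. Qed.
Lemma c1_1 kk : in_ideal (g kk) (F kk 1).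
Proof. apply: (@in_ideal_nth _ _ _ _ [:: 0; -1; -1; 0; 0; -1; 0; 0; 0; 0; -1; 0; 1; 0; 0; 0; 0; -1]); rewrite Fe_1; close1. Qed.
Lemma Fe_2 kk : F kk 2 = 0 - (Bc kk [:: 2; 1] 6 13) - (hb kk 8 13 17 19).
Proof. expandF. Qed.
Lemma c1_2 kk : in_ideal (g kk) (F kk 2).
Proof. apply: (@in_ideal_nth _ _ _ _ [:: 0; -1; 0; 0; 0; 0; 0; 0; 0; 0; 0; 0; 0; -1; 0; 0; 0; 0]); rewrite Fe_2; close1. Qed.
Lemma Fe_3 kk : F kk 3 = 0 - (Bc kk [:: 3; 1] 9 14) - (Bc kk [:: 3; 10] 15 19) + (hb kk 8 13 17 19) - (hb kk 11 14 14 18).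
Proof. expandF. Qed.
Lemma c1_3 kk : in_ideal (g kk) (F kk 3).
Proof. apply: (@in_ideal_nth _ _ _ _ [:: 0; 0; -1; 0; 0; 0; 0; -1; 0; 0; 0; 0; 0; 1; -1; 0; 0; 0]); rewrite Fe_3; close1. Qed.
Lemma Fe_4 kk : F kk 4 = 0 - (Bc kk [:: 5; 4] 18 15) - (Bc kk [:: 6; 4] 21 16) - (Bc kk [:: 4; 10] 12 18) + (hb kk 11 14 14 18).
Proof. expandF. Qed.
Lemma c1_4 kk : in_ideal (g kk) (F kk 4).
Proof. apply: (@in_ideal_nth _ _ _ _ [:: 0; 0; 0; -1; -1; 0; -1; 0; 0; 0; 0; 0; 0; 0; 1; 0; 0; 0]); rewrite Fe_4; close1. Qed.
Lemma Fe_5 kk : F kk 5 = 0 - (Bc kk [:: 5; 4] 18 15) - (hb kk 20 15 29 21).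
Proof. expandF. Qed.
Lemma c1_5 kk : in_ideal (g kk) (F kk 5).
Proof. apply: (@in_ideal_nth _ _ _ _ [:: 0; 0; 0; -1; 0; 0; 0; 0; 0; 0; 0; 0; 0; 0; 0; -1; 0; 0]); rewrite Fe_5; close1. Qed.
Lemma Fe_6 kk : F kk 6 = 0 - (Bc kk [:: 6; 4] 21 16) - (Bc kk [:: 6; 10] 27 21) + (hb kk 20 15 29 21) - (hb kk 23 16 26 20).
Proof. expandF. Qed.
Lemma c1_6 kk : in_ideal (g kk) (F kk 6).
Proof. apply: (@in_ideal_nth _ _ _ _ [:: 0; 0; 0; 0; -1; 0; 0; 0; 0; -1; 0; 0; 0; 0; 0; 1; -1; 0]); rewrite Fe_6; close1. Qed.
Lemma Fe_7 kk : F kk 7 = 0 - (Bc kk [:: 7; 10] 24 20) - (Bc kk [:: 1; 7] 30 22) + (hb kk 23 16 26 20).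
Proof. expandF. Qed.
Lemma c1_7 kk : in_ideal (g kk) (F kk 7).
Proof. apply: (@in_ideal_nth _ _ _ _ [:: 0; 0; 0; 0; 0; 0; 0; 0; -1; 0; -1; 0; 0; 0; 0; 0; 1; 0]); rewrite Fe_7; close1. Qed.
Lemma Fe_8 kk : F kk 8 = 0 - (Bc kk [:: 0; 8] 0 12).
Proof. expandF. Qed.
Lemma c1_8 kk : in_ideal (g kk) (F kk 8).
Proof. apply: (@in_ideal_nth _ _ _ _ [:: -1; 0; 0; 0; 0; 0; 0; 0; 0; 0; 0; 0; 0; 0; 0; 0; 0; 0]); rewrite Fe_8; close1. Qed.
Lemma Fe_9 kk : F kk 9 = 0 - (Bc kk [:: 1; 9] 3 17).
Proof. expandF. Qed.
Lemma c1_9 kk : in_ideal (g kk) (F kk 9).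
Proof. apply: (@in_ideal_nth _ _ _ _ [:: 0; 0; 0; 0; 0; -1; 0; 0; 0; 0; 0; 0; 0; 0; 0; 0; 0; 0]); rewrite Fe_9; close1. Qed.
Lemma Fe_10 kk : F kk 10 = 0 - (Bc kk [:: 4; 10] 12 18) - (Bc kk [:: 3; 10] 15 19) - (Bc kk [:: 7; 10] 24 20) - (Bc kk [:: 6; 10] 27 21).
Proof. expandF. Qed.
Lemma c1_10 kk : in_ideal (g kk) (F kk 10).
Proof. apply: (@in_ideal_nth _ _ _ _ [:: 0; 0; 0; 0; 0; 0; -1; -1; -1; -1; 0; 0; 0; 0; 0; 0; 0; 0]); rewrite Fe_10; close1. Qed.
Lemma Fe_11 kk : F kk 11 = 0 - (Bc kk [:: 24; 11] 33 23).
Proof. expandF. Qed.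
Lemma c1_11 kk : in_ideal (g kk) (F kk 11).
Proof. apply: (@in_ideal_nth _ _ _ _ [:: 0; 0; 0; 0; 0; 0; 0; 0; 0; 0; 0; -1; 0; 0; 0; 0; 0; 0]); rewrite Fe_11; close1. Qed.
Lemma Fe_12 kk : F kk 12 = 0 + (Bc kk [:: 0; 8] 0 12).
Proof. expandF. Qed.
Lemma c1_12 kk : in_ideal (g kk) (F kk 12).
Proof. apply: (@in_ideal_nth _ _ _ _ [:: 1; 0; 0; 0; 0; 0; 0; 0; 0; 0; 0; 0; 0; 0; 0; 0; 0; 0]); rewrite Fe_12; close1. Qed.
Lemma Fe_13 kk : F kk 13 = 0 + (Bc kk [:: 2; 1] 6 13).
Proof. expandF. Qed.
Lemma c1_13 kk : in_ideal (g kk) (F kk 13).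
Proof. apply: (@in_ideal_nth _ _ _ _ [:: 0; 1; 0; 0; 0; 0; 0; 0; 0; 0; 0; 0; 0; 0; 0; 0; 0; 0]); rewrite Fe_13; close1. Qed.
Lemma Fe_14 kk : F kk 14 = 0 + (Bc kk [:: 3; 1] 9 14).
Proof. expandF. Qed.
Lemma c1_14 kk : in_ideal (g kk) (F kk 14).
Proof. apply: (@in_ideal_nth _ _ _ _ [:: 0; 0; 1; 0; 0; 0; 0; 0; 0; 0; 0; 0; 0; 0; 0; 0; 0; 0]); rewrite Fe_14; close1. Qed.
Lemma Fe_15 kk : F kk 15 = 0 + (Bc kk [:: 5; 4] 18 15).
Proof. expandF. Qed.
Lemma c1_15 kk : in_ideal (g kk) (F kk 15).
Proof. apply: (@in_ideal_nth _ _ _ _ [:: 0; 0; 0; 1; 0; 0; 0; 0; 0; 0; 0; 0; 0; 0; 0; 0; 0; 0]); rewrite Fe_15; close1. Qed.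
Lemma Fe_16 kk : F kk 16 = 0 + (Bc kk [:: 6; 4] 21 16).
Proof. expandF. Qed.
Lemma c1_16 kk : in_ideal (g kk) (F kk 16).
Proof. apply: (@in_ideal_nth _ _ _ _ [:: 0; 0; 0; 0; 1; 0; 0; 0; 0; 0; 0; 0; 0; 0; 0; 0; 0; 0]); rewrite Fe_16; close1. Qed.
Lemma Fe_17 kk : F kk 17 = 0 + (Bc kk [:: 1; 9] 3 17).
Proof. expandF. Qed.
Lemma c1_17 kk : in_ideal (g kk) (F kk 17).
Proof. apply: (@in_ideal_nth _ _ _ _ [:: 0; 0; 0; 0; 0; 1; 0; 0; 0; 0; 0; 0; 0; 0; 0; 0; 0; 0]); rewrite Fe_17; close1. Qed.
Lemma Fe_18 kk : F kk 18 = 0 + (Bc kk [:: 4; 10] 12 18).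
Proof. expandF. Qed.
Lemma c1_18 kk : in_ideal (g kk) (F kk 18).
Proof. apply: (@in_ideal_nth _ _ _ _ [:: 0; 0; 0; 0; 0; 0; 1; 0; 0; 0; 0; 0; 0; 0; 0; 0; 0; 0]); rewrite Fe_18; close1. Qed.
Lemma Fe_19 kk : F kk 19 = 0 + (Bc kk [:: 3; 10] 15 19).
Proof. expandF. Qed.
Lemma c1_19 kk : in_ideal (g kk) (F kk 19).
Proof. apply: (@in_ideal_nth _ _ _ _ [:: 0; 0; 0; 0; 0; 0; 0; 1; 0; 0; 0; 0; 0; 0; 0; 0; 0; 0]); rewrite Fe_19; close1. Qed.
Lemma Fe_20 kk : F kk 20 = 0 + (Bc kk [:: 7; 10] 24 20).
Proof. expandF. Qed.
Lemma c1_20 kk : in_ideal (g kk) (F kk 20).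
Proof. apply: (@in_ideal_nth _ _ _ _ [:: 0; 0; 0; 0; 0; 0; 0; 0; 1; 0; 0; 0; 0; 0; 0; 0; 0; 0]); rewrite Fe_20; close1. Qed.
Lemma Fe_21 kk : F kk 21 = 0 + (Bc kk [:: 6; 10] 27 21).
Proof. expandF. Qed.
Lemma c1_21 kk : in_ideal (g kk) (F kk 21).
Proof. apply: (@in_ideal_nth _ _ _ _ [:: 0; 0; 0; 0; 0; 0; 0; 0; 0; 1; 0; 0; 0; 0; 0; 0; 0; 0]); rewrite Fe_21; close1. Qed.
Lemma Fe_22 kk : F kk 22 = 0 + (Bc kk [:: 1; 7] 30 22).
Proof. expandF. Qed.
Lemma c1_22 kk : in_ideal (g kk) (F kk 22).
Proof. apply: (@in_ideal_nth _ _ _ _ [:: 0; 0; 0; 0; 0; 0; 0; 0; 0; 0; 1; 0; 0; 0; 0; 0; 0; 0]); rewrite Fe_22; close1. Qed.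
Lemma Fe_23 kk : F kk 23 = 0 + (Bc kk [:: 24; 11] 33 23).
Proof. expandF. Qed.
Lemma c1_23 kk : in_ideal (g kk) (F kk 23).
Proof. apply: (@in_ideal_nth _ _ _ _ [:: 0; 0; 0; 0; 0; 0; 0; 0; 0; 0; 0; 1; 0; 0; 0; 0; 0; 0]); rewrite Fe_23; close1. Qed.
Lemma Fe_24 kk : F kk 24 = 0 - (Bc kk [:: 24; 11] 33 23) + (hb kk 32 22 35 23).
Proof. expandF. Qed.
Lemma c1_24 kk : in_ideal (g kk) (F kk 24).
Proof. apply: (@in_ideal_nth _ _ _ _ [:: 0; 0; 0; 0; 0; 0; 0; 0; 0; 0; 0; -1; 0; 0; 0; 0; 0; 1]); rewrite Fe_24; close1. Qed.
Lemma c2_0 kk : in_ideal (fun i : 'I_25 => F kk i) (nth 0 (Gl kk) 0).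
Proof. apply: (@in_ideal_nth _ _ _ _ [:: 0; 0; 0; 0; 0; 0; 0; 0; 0; 0; 0; 0; 1; 0; 0; 0; 0; 0; 0; 0; 0; 0; 0; 0; 0]).
  rewrite -(big_mkord xpredT (fun j => nth 0 _ j * F _ j)) /index_iota /=.
  rewrite !big_cons big_nil /= Fe_12; ring. Qed.
Lemma c2_1 kk : in_ideal (fun i : 'I_25 => F kk i) (nth 0 (Gl kk) 1).
Proof. apply: (@in_ideal_nth _ _ _ _ [:: 0; 0; 0; 0; 0; 0; 0; 0; 0; 0; 0; 0; 0; 1; 0; 0; 0; 0; 0; 0; 0; 0; 0; 0; 0]).
  rewrite -(big_mkord xpredT (fun j => nth 0 _ j * F _ j)) /index_iota /=.
  rewrite !big_cons big_nil /= Fe_13; ring. Qed.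
Lemma c2_2 kk : in_ideal (fun i : 'I_25 => F kk i) (nth 0 (Gl kk) 2).
Proof. apply: (@in_ideal_nth _ _ _ _ [:: 0; 0; 0; 0; 0; 0; 0; 0; 0; 0; 0; 0; 0; 0; 1; 0; 0; 0; 0; 0; 0; 0; 0; 0; 0]).
  rewrite -(big_mkord xpredT (fun j => nth 0 _ j * F _ j)) /index_iota /=.
  rewrite !big_cons big_nil /= Fe_14; ring. Qed.
Lemma c2_3 kk : in_ideal (fun i : 'I_25 => F kk i) (nth 0 (Gl kk) 3).
Proof. apply: (@in_ideal_nth _ _ _ _ [:: 0; 0; 0; 0; 0; 0; 0; 0; 0; 0; 0; 0; 0; 0; 0; 1; 0; 0; 0; 0; 0; 0; 0; 0; 0]).
  rewrite -(big_mkord xpredT (fun j => nth 0 _ j * F _ j)) /index_iota /=.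
  rewrite !big_cons big_nil /= Fe_15; ring. Qed.
Lemma c2_4 kk : in_ideal (fun i : 'I_25 => F kk i) (nth 0 (Gl kk) 4).
Proof. apply: (@in_ideal_nth _ _ _ _ [:: 0; 0; 0; 0; 0; 0; 0; 0; 0; 0; 0; 0; 0; 0; 0; 0; 1; 0; 0; 0; 0; 0; 0; 0; 0]).
  rewrite -(big_mkord xpredT (fun j => nth 0 _ j * F _ j)) /index_iota /=.
  rewrite !big_cons big_nil /= Fe_16; ring. Qed.
Lemma c2_5 kk : in_ideal (fun i : 'I_25 => F kk i) (nth 0 (Gl kk) 5).
Proof. apply: (@in_ideal_nth _ _ _ _ [:: 0; 0; 0; 0; 0; 0; 0; 0; 0; 0; 0; 0; 0; 0; 0; 0; 0; 1; 0; 0; 0; 0; 0; 0; 0]).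
  rewrite -(big_mkord xpredT (fun j => nth 0 _ j * F _ j)) /index_iota /=.
  rewrite !big_cons big_nil /= Fe_17; ring. Qed.
Lemma c2_6 kk : in_ideal (fun i : 'I_25 => F kk i) (nth 0 (Gl kk) 6).
Proof. apply: (@in_ideal_nth _ _ _ _ [:: 0; 0; 0; 0; 0; 0; 0; 0; 0; 0; 0; 0; 0; 0; 0; 0; 0; 0; 1; 0; 0; 0; 0; 0; 0]).
  rewrite -(big_mkord xpredT (fun j => nth 0 _ j * F _ j)) /index_iota /=.
  rewrite !big_cons big_nil /= Fe_18; ring. Qed.
Lemma c2_7 kk : in_ideal (fun i : 'I_25 => F kk i) (nth 0 (Gl kk) 7).
Proof. apply: (@in_ideal_nth _ _ _ _ [:: 0; 0; 0; 0; 0; 0; 0; 0; 0; 0; 0; 0; 0; 0; 0; 0; 0; 0; 0; 1; 0; 0; 0; 0; 0]).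
  rewrite -(big_mkord xpredT (fun j => nth 0 _ j * F _ j)) /index_iota /=.
  rewrite !big_cons big_nil /= Fe_19; ring. Qed.
Lemma c2_8 kk : in_ideal (fun i : 'I_25 => F kk i) (nth 0 (Gl kk) 8).
Proof. apply: (@in_ideal_nth _ _ _ _ [:: 0; 0; 0; 0; 0; 0; 0; 0; 0; 0; 0; 0; 0; 0; 0; 0; 0; 0; 0; 0; 1; 0; 0; 0; 0]).
  rewrite -(big_mkord xpredT (fun j => nth 0 _ j * F _ j)) /index_iota /=.
  rewrite !big_cons big_nil /= Fe_20; ring. Qed.
Lemma c2_9 kk : in_ideal (fun i : 'I_25 => F kk i) (nth 0 (Gl kk) 9).
Proof. apply: (@in_ideal_nth _ _ _ _ [:: 0; 0; 0; 0; 0; 0; 0; 0; 0; 0; 0; 0; 0; 0; 0; 0; 0; 0; 0; 0; 0; 1; 0; 0; 0]).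
  rewrite -(big_mkord xpredT (fun j => nth 0 _ j * F _ j)) /index_iota /=.
  rewrite !big_cons big_nil /= Fe_21; ring. Qed.
Lemma c2_10 kk : in_ideal (fun i : 'I_25 => F kk i) (nth 0 (Gl kk) 10).
Proof. apply: (@in_ideal_nth _ _ _ _ [:: 0; 0; 0; 0; 0; 0; 0; 0; 0; 0; 0; 0; 0; 0; 0; 0; 0; 0; 0; 0; 0; 0; 1; 0; 0]).
  rewrite -(big_mkord xpredT (fun j => nth 0 _ j * F _ j)) /index_iota /=.
  rewrite !big_cons big_nil /= Fe_22; ring. Qed.
Lemma c2_11 kk : in_ideal (fun i : 'I_25 => F kk i) (nth 0 (Gl kk) 11).
Proof. apply: (@in_ideal_nth _ _ _ _ [:: 0; 0; 0; 0; 0; 0; 0; 0; 0; 0; 0; 0; 0; 0; 0; 0; 0; 0; 0; 0; 0; 0; 0; 1; 0]).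
  rewrite -(big_mkord xpredT (fun j => nth 0 _ j * F _ j)) /index_iota /=.
  rewrite !big_cons big_nil /= Fe_23; ring. Qed.
Lemma c2_12 kk : in_ideal (fun i : 'I_25 => F kk i) (nth 0 (Gl kk) 12).
Proof. apply: (@in_ideal_nth _ _ _ _ [:: -1; 0; 0; 0; 0; 0; 0; 0; 0; 0; 0; 0; -1; 0; 0; 0; 0; 0; 0; 0; 0; 0; 0; 0; 0]).
  rewrite -(big_mkord xpredT (fun j => nth 0 _ j * F _ j)) /index_iota /=.
  rewrite !big_cons big_nil /= Fe_0 Fe_12; ring. Qed.
Lemma c2_13 kk : in_ideal (fun i : 'I_25 => F kk i) (nth 0 (Gl kk) 13).
Proof. apply: (@in_ideal_nth _ _ _ _ [:: 0; 0; -1; 0; 0; 0; 0; 0; 0; 0; 0; 0; 0; -1; 0; 0; 0; 0; 0; 0; 0; 0; 0; 0; 0]).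
  rewrite -(big_mkord xpredT (fun j => nth 0 _ j * F _ j)) /index_iota /=.
  rewrite !big_cons big_nil /= Fe_2 Fe_13; ring. Qed.
Lemma c2_14 kk : in_ideal (fun i : 'I_25 => F kk i) (nth 0 (Gl kk) 14).
Proof. apply: (@in_ideal_nth _ _ _ _ [:: 0; 0; 0; 0; 1; 0; 0; 0; 0; 0; 0; 0; 0; 0; 0; 1; 1; 0; 1; 0; 0; 0; 0; 0; 0]).
  rewrite -(big_mkord xpredT (fun j => nth 0 _ j * F _ j)) /index_iota /=.
  rewrite !big_cons big_nil /= Fe_4 Fe_18 Fe_15 Fe_16; ring. Qed.
Lemma c2_15 kk : in_ideal (fun i : 'I_25 => F kk i) (nth 0 (Gl kk) 15).
Proof. apply: (@in_ideal_nth _ _ _ _ [:: 0; 0; 0; 0; 0; -1; 0; 0; 0; 0; 0; 0; 0; 0; 0; -1; 0; 0; 0; 0; 0; 0; 0; 0; 0]).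
  rewrite -(big_mkord xpredT (fun j => nth 0 _ j * F _ j)) /index_iota /=.
  rewrite !big_cons big_nil /= Fe_5 Fe_15; ring. Qed.
Lemma c2_16 kk : in_ideal (fun i : 'I_25 => F kk i) (nth 0 (Gl kk) 16).
Proof. apply: (@in_ideal_nth _ _ _ _ [:: 0; 0; 0; 0; 0; 0; 0; 1; 0; 0; 0; 0; 0; 0; 0; 0; 0; 0; 0; 0; 1; 0; 1; 0; 0]).
  rewrite -(big_mkord xpredT (fun j => nth 0 _ j * F _ j)) /index_iota /=.
  rewrite !big_cons big_nil /= Fe_7 Fe_20 Fe_22; ring. Qed.
Lemma c2_17 kk : in_ideal (fun i : 'I_25 => F kk i) (nth 0 (Gl kk) 17).
Proof. apply: (@in_ideal_nth _ _ _ _ [:: 0; 0; 0; 0; 0; 0; 0; 0; 0; 0; 0; 0; 0; 0; 0; 0; 0; 0; 0; 0; 0; 0; 0; 1; 1]).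
  rewrite -(big_mkord xpredT (fun j => nth 0 _ j * F _ j)) /index_iota /=.
  rewrite !big_cons big_nil /= Fe_24 Fe_23; ring. Qed.

Lemma c1_all kk (i : 'I_25) : in_ideal (g kk) (F kk i).
Proof.
case: i => m hm /=.
do 25 (case: m hm => [|m] hm; first by
  [ apply: c1_0 | apply: c1_1 | apply: c1_2 | apply: c1_3 | apply: c1_4
  | apply: c1_5 | apply: c1_6 | apply: c1_7 | apply: c1_8 | apply: c1_9
  | apply: c1_10 | apply: c1_11 | apply: c1_12 | apply: c1_13 | apply: c1_14
  | apply: c1_15 | apply: c1_16 | apply: c1_17 | apply: c1_18 | apply: c1_19
  | apply: c1_20 | apply: c1_21 | apply: c1_22 | apply: c1_23 | apply: c1_24 ]).
by [].
Qed.

Lemma c2_all kk (j : 'I_18) : in_ideal (fun i : 'I_25 => F kk i) (g kk j).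
Proof.
rewrite /g; case: j => m hm /=.
do 18 (case: m hm => [|m] hm; first by
  [ apply: c2_0 | apply: c2_1 | apply: c2_2 | apply: c2_3 | apply: c2_4
  | apply: c2_5 | apply: c2_6 | apply: c2_7 | apply: c2_8 | apply: c2_9
  | apply: c2_10 | apply: c2_11 | apply: c2_12 | apply: c2_13 | apply: c2_14
  | apply: c2_15 | apply: c2_16 | apply: c2_17 ]).
by [].
Qed.

Lemma ideal_trans n (I J : finType) (f : I -> {mpoly R[n]}) (h : J -> {mpoly R[n]}) :
  (forall j, in_ideal f (h j)) -> forall p, in_ideal h p -> in_ideal f p.
Proof.
move=> H p [c ->].
elim/big_rec: _ => [|j q _ [e ->]].
  by exists (fun _ => 0); rewrite big1 // => i _; rewrite mul0r.
case: (H j) => d ->.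
exists (fun i => c j * d i + e i).
rewrite mulr_sumr -big_split; apply: eq_bigr => i _ /=.
by rewrite mulrDl mulrA.
Qed.

Lemma cmonoX n c : exists m, cmono n c = 'X_[m].
Proof.
elim: c => [|a c [m IH]].
  by exists 0%MM; rewrite /cmono big_nil mpolyX0.
exists (U_(inord a) + m)%MM; rewrite /cmono big_cons -/(cmono n c) IH mpolyXD.
by [].
Qed.

Lemma bin2 (a b : R) y y' : (size (msupp (a%:MP * M y - b%:MP * M y')) <= 2)%N.
Proof.
rewrite /M; have [m1 ->] := cmonoX 24 y; have [m2 ->] := cmonoX 24 y'.
rewrite !mul_mpolyC.
apply: (@leq_trans (size [:: m1; m2])); last by [].
apply: uniq_leq_size; first exact: msupp_uniq.
move=> x /msuppB_le; rewrite mem_cat => /orP[/msuppZ_le|/msuppZ_le];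
  rewrite msuppX !inE => /eqP ->; rewrite eqxx ?orbT //.
Qed.

Lemma M0 a l : (M (a :: l)).@[fun _ : 'I_25 => 0] = 0.
Proof. by rewrite /M /cmono big_cons mevalM mevalXU mul0r. Qed.

Lemma rx_ne r : (r < 36)%N -> exists a l, (rx r).1 = a :: l.
Proof.
do 36 (case: r => [|r]; first by move=> _; do 2 eexists; reflexivity).
by [].
Qed.

Theorem mainTheorem5 (k : 'I_36 -> R) (hk : forall r, 0 < k r) :
  toric_steady_states (erk_f k).
Proof.
set kk := fun n => k (inord n).
have fE : forall i, erk_f k i = F kk i by move=> i; rewrite erk_fE.
split.
  exists 18%N, (g kk); split.
    move=> j; rewrite /is_binomial /g; case: j => m hm /=.
    do 18 (case: m hm => [|m] hm; first by rewrite /= /Bc /hb -?mpolyCD; apply: bin2).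
    by [].
  move=> p; split; apply: ideal_trans.
    by move=> i; rewrite fE; apply: c1_all.
  move=> j; case: (c2_all kk j) => c ->; exists c.
  by apply: eq_bigr => i _; rewrite fE.
exists (fun _ => 0); split => // p [c ->].
rewrite (big_morph _ (mevalD _) (meval0 _)) big1 // => i _.
rewrite mevalM fE /F (big_morph _ (mevalD _) (meval0 _)) big1_seq ?mulr0 // => r.
rewrite mem_iota => /andP[_]; rewrite add0n => hr.
have [a [l ->]] := rx_ne r hr.
by rewrite mevalZ mevalM M0 mul0r mulr0.
Qed.
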